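(* Let $w:[0,1]\to\mathbb{R}^+$ be a non-increasing differentiable function (extended to $\mathbb{R}$ by $w(y)=w(0)$ for $y\le0$, $w(y)=w(1)$ for $y\ge1$), and let $R$ be a $k\times k$ doubly stochastic matrix. If $$k>-\frac{w'(1/k)}{w(1/k)},$$ then $\frac1k\mathbf 1$ is a stable equilibrium of the ODE $\dot y=h(y)$, where $h(y)=\frac{\mathbf{w}(y)}{S_w(y)}R-y$.
   Context: $\mathbf 1=(1,\dots,1)\in\mathbb{R}^k$ (row vector). For $y\in\mathbb{R}^k$, $\mathbf{w}(y)=(w(y_1),\dots,w(y_k))$ and $S_w(y)=\sum_i w(y_i)$. $R$ doubly stochastic means nonnegative entries with all row and column sums $1$. An equilibrium $x^*$ of $\dot y=h(y)$ (i.e. $h(x^* )=0$) is called stable if all eigenvalues of the Jacobian matrix of $h$ at $x^*$ have negative real part. *)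

(* Defs.v *)
From HB Require Import structures.
From mathcomp Require Import all_boot all_order all_algebra.
From mathcomp Require Import all_classical all_reals all_analysis.
From mathcomp Require Import complex.
Set Implicit Arguments. Unset Strict Implicit. Unset Printing Implicit Defensive.
Import Order.TTheory GRing.Theory Num.Theory.
Import numFieldNormedType.Exports.
Local Open Scope classical_set_scope.
Local Open Scope ring_scope.

Definition wext (R : realType) (w : R -> R) (y : R) : R :=
  if y <= 0 then w 0 else if 1 <= y then w 1 else w y.

Definition wvec (R : realType) (k : nat) (w : R -> R) (y : 'rV[R]_k) : 'rV[R]_k :=
  \row_i wext w (y 0 i).

Definition Sw (R : realType) (k : nat) (w : R -> R) (y : 'rV[R]_k) : R :=
  \sum_i wext w (y 0 i).

Definition hfield (R : realType) (k : nat) (w : R -> R) (Rm : 'M[R]_k)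
  (y : 'rV[R]_k) : 'rV[R]_k :=
  ((Sw w y)^-1 *: wvec w y) *m Rm - y.

Definition doubly_stochastic (R : realType) (k : nat) (Rm : 'M[R]_k) : Prop :=
  (forall i j, 0 <= Rm i j) /\
  (forall i, \sum_j Rm i j = 1) /\
  (forall j, \sum_i Rm i j = 1).

Definition unif (R : realType) (k : nat) : 'rV[R]_k := const_mx (k%:R^-1).

Definition stable_equilibrium (R : realType) (k : nat)
  (f : 'rV[R]_k -> 'rV[R]_k) (x : 'rV[R]_k) : Prop :=
  f x = 0 /\ differentiable f x /\
  forall lam : R[i],
    eigenvalue (map_mx (fun a : R => (a%:C)%C) (jacobian f x)) lam ->
    complex.Re lam < 0.

Definition is_derivative_on01 (R : realType) (w w' : R -> R) : Prop :=
  forall x : R, 0 <= x <= 1 ->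
    (fun t => (w t - w x) / (t - x)) @
      within [set t : R | 0 <= t <= 1 /\ t != x] (nbhs x) --> w' x.

(* Main.v *)
Require Import Defs.
From HB Require Import structures.
From mathcomp Require Import all_boot all_order all_algebra.
From mathcomp Require Import all_classical all_reals all_analysis.
From mathcomp Require Import complex.
From mathcomp Require Import ring lra.
Import Order.TTheory GRing.Theory Num.Theory.
Local Open Scope ring_scope.

Section Aux.
Set Implicit Arguments. Unset Strict Implicit. Unset Printing Implicit Defensive.
Import numFieldNormedType.Exports.
Local Open Scope classical_set_scope.
Local Open Scope ring_scope.

Section Helpers.
Variable R : realType.

Lemma is_diff_sum (V W : normedModType R) n (f df : 'I_n -> V -> W) x :
  (forall i, is_diff x (f i) (df i)) -> is_diff x (\sum_i f i) (\sum_i df i).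
Proof.
elim: n f df => [|n IH] f df H.
  rewrite !big_ord0.
  have -> : (0 : V -> W) = cst 0 by [].
  exact: is_diff_cst.
rewrite !big_ord_recr /=; apply: is_diffD => //.
Qed.

Lemma is_diffV' (V : normedModType R) (f df : V -> R) x :
  is_diff x f df -> f x != 0 ->
  is_diff x (fun y => (f y)^-1) (- (f x) ^- 2 \*: df).
Proof.
move=> hf fx0; apply: DiffDef.
  by apply: differentiableV => //; exact: ex_diff.
by rewrite diffV ?diff_val //; exact: ex_diff.
Qed.

Lemma is_diffZl' (V W : normedModType R) (k dk : V -> R) (f : W) x :
  is_diff x k dk -> is_diff x (fun z => k z *: f) (fun z => dk z *: f).
Proof.
move=> hk; apply: DiffDef.
  by apply: differentiableZl; exact: ex_diff.
by rewrite diffZl ?diff_val //; exact: ex_diff.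
Qed.

Lemma is_diff_coord m n (i : 'I_m) (j : 'I_n) (x : 'M[R]_(m, n)) :
  is_diff x (fun N : 'M[R]_(m, n) => N i j) (fun N : 'M[R]_(m, n) => N i j).
Proof.
have @f : {linear 'M[R]_(m, n) -> R}.
  by exists (fun N : 'M[R]_(_, _) => N i j); do 2![eexists]; do ?[constructor];
     rewrite ?mxE// => ? *; rewrite ?mxE//; move=> ?; rewrite !mxE.
rewrite (_ : (fun _ => _) = f) //; apply: DiffDef.
  exact/linear_differentiable/coord_continuous.
by rewrite diff_lin //; exact: coord_continuous.
Qed.

End Helpers.
Lemma wext_in (R : realType) (w : R -> R) y : 0 < y < 1 -> wext w y = w y.
Proof. by case/andP=> h0 h1; rewrite /wext leNgt h0 /= leNgt h1. Qed.

Lemma deriv_eps (R : realType) (w w' : R -> R) x : 0 < x < 1 ->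
  is_derivative_on01 w w' -> forall e, 0 < e -> exists2 d, 0 < d &
  forall t, `|x - t| < d -> 0 <= t <= 1 -> t != x ->
     `|w' x - (w t - w x) / (t - x)| < e.
Proof.
move=> /andP[x0 x1] hd e e0.
have := hd x _; rewrite ltW // ltW // => /(_ isT) /cvgrPdist_lt /(_ e e0).
rewrite near_withinE => /nbhs_normP [d d0 Hd].
exists d => // t ht t01 tx.
by apply: (Hd t) => //.
Qed.

Lemma wext_cvg (R : realType) (w w' : R -> R) x : 0 < x < 1 ->
  is_derivative_on01 w w' ->
  (fun h : R => h^-1 *: ((wext w \o shift x) (h *: 1) - wext w x)) @ 0^' --> w' x.
Proof.
move=> hx hd; have /andP[x0 x1] := hx.
apply/cvgrPdist_lt => e e0.
have [d d0 Hd] := deriv_eps hx hd e0.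
rewrite near_withinE; apply/nbhs_normP.
exists (Num.min d (Num.min x (1 - x))).
  by rewrite /= !lt_min d0 x0 subr_gt0 x1.
move=> h /= hb hn0.
rewrite sub0r normrN !lt_min in hb; case/and3P: hb => hd' hx' h1x.
have hx1 : 0 < h + x < 1.
  apply/andP; split.
    by have := ler_norm (- h); rewrite normrN; lra.
  by have := ler_norm h; lra.
rewrite /= -[h%:A]/(h * 1) mulr1 (wext_in _ hx1) (wext_in _ hx).
have := Hd (h + x); rewrite opprD addrCA subrr addr0 normrN addrK.
rewrite -[_ *: _]/(_ * _) mulrC; apply => //.
  by case/andP: hx1 => a b; rewrite !ltW.
by rewrite -subr_eq0 addrK.
Qed.

Lemma wprime_le0 (R : realType) (w w' : R -> R) x : 0 < x < 1 ->
  is_derivative_on01 w w' ->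
  (forall x y : R, 0 <= x -> x <= y -> y <= 1 -> w y <= w x) -> w' x <= 0.
Proof.
move=> hx hd mono; have /andP[x0 x1] := hx.
rewrite leNgt; apply/negP => wp.
have [d d0 Hd] := deriv_eps hx hd wp.
set m := Num.min d (1 - x) / 2.
have m0 : 0 < m by rewrite /m divr_gt0 // lt_min d0 subr_gt0.
have md : m < d.
  have : Num.min d (1 - x) <= d by rewrite ge_min lexx.
  rewrite /m; lra.
have m1 : m <= 1 - x.
  have : Num.min d (1 - x) <= 1 - x by rewrite ge_min lexx orbT.
  rewrite /m; lra.
have := Hd (x + m); rewrite opprD addrA subrr add0r normrN addrAC subrr add0r.
rewrite (ger0_norm (ltW m0)).
have q : (w (x + m) - w x) / m <= 0.
  rewrite pmulr_lle0 ?invr_gt0 // subr_le0 mono //; lra.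
move=> H; have := H md; rewrite -subr_eq0 addrAC subrr add0r gt_eqF //.
have -> : (0 <= x + m <= 1) = true by apply/andP; split; lra.
move=> /(_ isT isT).
have := ler_norm (w' x - (w (x + m) - w x) / m); lra.
Qed.

Lemma scaleRE (R : realType) (a b : R) : a *: b = a * b.
Proof. by []. Qed.

Lemma hfield_is_diff (R : realType) n (w w' : R -> R) (Rm : 'M[R]_n.+2) :
  (forall x, 0 <= x <= 1 -> 0 < w x) -> is_derivative_on01 w w' ->
  (forall j, \sum_i Rm i j = 1) ->
  let x := (n.+2)%:R^-1 in
  let a := w' x / ((n.+2)%:R * w x) in
  is_diff (unif R n.+2) (hfield w Rm)
   (fun v => v *m \matrix_(i, j) (a * (Rm i j - x) - (i == j)%:R)).
Proof.
move=> wpos hd cs x a.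
have x01 : 0 < x < 1.
  by rewrite invr_gt0 ltr0n /= invf_lt1 ?ltr0n // ltr1n.
set p := unif R n.+2.
have px i : p 0 i = x by rewrite mxE.
pose g i := fun y : 'rV[R]_n.+2 => wext w (y 0 i).
pose S := \sum_i g i.
have hS y : S y = Sw w y by rewrite /S fct_sumE.
have eqh : hfield w Rm =
   \sum_i (fun y => (g i y * (S y)^-1) *: row i Rm) - id.
  apply/funext => y; rewrite /hfield mulmx_sum_row /= fct_sumE.
  congr (_ - _); apply: eq_bigr => i _; by rewrite !mxE /= hS mulrC.
have wdiff : is_diff x (wext w) (fun h => h *: w' x).
  have hder : derivable (wext w) x 1.
    by apply/cvg_ex; exists (w' x); exact: wext_cvg.
  have hD : 'D_1 (wext w) x = w' x by apply: cvg_lim => //; exact: wext_cvg.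
  have dd : differentiable (wext w) x by apply/derivable1_diffP.
  apply: DiffDef => //.
  by rewrite diff1E // derive1E hD.
have gd i : is_diff p (g i) (fun v => v 0 i *: w' x).
  have wd' : is_diff (p 0 i) (wext w) (fun h => h *: w' x) by rewrite px.
  exact: (is_diff_comp (is_diff_coord 0 i p) wd').
have Sd : is_diff p S _ := is_diff_sum gd.
have wx : 0 < w x by apply: wpos; case/andP: x01 => a0 a1; rewrite !ltW.
have Sp : S p = (n.+2)%:R * w x.
  rewrite hS /Sw (eq_bigr (fun _ => w x)); last by move=> i _; rewrite px wext_in.
  by rewrite sumr_const card_ord mulr_natl.
have Sp0 : S p != 0 by rewrite Sp mulf_neq0 // ?gt_eqF.
have Vd := is_diffV' Sd Sp0.
have cd i := is_diffM (gd i) Vd.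
have zd i := is_diffZl' (row i Rm) (cd i).
have hdiff := is_diffB (is_diff_sum zd) (is_diff_id p).
rewrite eqh; apply: is_diff_eq hdiff _.
apply/funext => v /=.
rewrite !fctE fct_sumE /=.
have dc i : (g i p *:
      (- S p ^- 2 \*: \sum_(i0 < n.+2) (fun v0 : 'rV_n.+2 => v0 0 i0 *: w' x)) +
      (S p)^-1 *: (fun v0 : 'rV_n.+2 => v0 0 i *: w' x)) v = a * (v 0 i - x * \sum_l v 0 l).
  rewrite !fctE /= fct_sumE /= Sp /g px wext_in //.
  rewrite !scaleRE -mulr_suml /a /x.
  have w0 : w x != 0 by rewrite gt_eqF.
  have k0 : (n.+2)%:R != 0 :> R by rewrite pnatr_eq0.
  field; rewrite w0 andbT gt_eqF //; have := ler0n R n; lra.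
under eq_bigr => i _ do rewrite dc.
set sig := \sum_l v 0 l.
apply/rowP => j; rewrite !mxE summxE.
under eq_bigr => i _ do rewrite !mxE.
under [RHS]eq_bigr => i _ do rewrite !mxE.
have -> : \sum_i a * (v 0 i - x * sig) * Rm i j = \sum_i a * v 0 i * Rm i j - a * x * sig.
  rewrite -[a * x * sig]mulr1 -(cs j) [a * x * sig * _]mulr_sumr -sumrB.
  by apply: eq_bigr => i _; ring.
have -> : \sum_i v 0 i * (a * (Rm i j - x) - (i == j)%:R) =
   \sum_i a * v 0 i * Rm i j - a * x * sig - \sum_i v 0 i * (i == j)%:R.
  by rewrite /sig [a * x * _]mulr_sumr -!sumrB; apply: eq_bigr => i _; ring.
congr (_ - _).
rewrite (bigD1 j) //= eqxx mulr1 big1 ?addr0 // => i /negbTE ->; by rewrite mulr0.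
Qed.

Lemma eig_neg (R : realType) (n : nat) (Rm : 'M[R]_n.+1) (a kap : R) :
  (forall j, \sum_i Rm i j = 1) -> (forall i, \sum_j Rm i j = 1) ->
  (forall i j, 0 <= Rm i j) -> (n.+1)%:R * kap = 1 ->
  `|a| < 1 -> forall lam : R[i],
  eigenvalue (map_mx (fun x : R => (x%:C)%C)
     (\matrix_(i, j) (a * (Rm i j - kap) - (i == j)%:R))) lam ->
  complex.Re lam < 0.
Proof.
move=> cs rs nn hk ha lam /eigenvalueP [v hv vn0].
set sig := \sum_i v 0 i.
have E j : a%:C%C * (\sum_i v 0 i * (Rm i j)%:C%C) - (a * kap)%:C%C * sig - v 0 j
   = lam * v 0 j.
  have := congr1 (fun M : 'rV[R[i]]_n.+1 => M 0 j) hv; rewrite !mxE => <-.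
  rewrite mulr_sumr mulr_sumr -sumrB -[v 0 j](_ : \sum_i v 0 i * ((i == j)%:R) = _).
    rewrite -sumrB; apply: eq_bigr => i _; rewrite !mxE.
    rewrite !rmorphB !rmorphM /= rmorph_nat; ring.
  rewrite (bigD1 j) //= eqxx mulr1 big1 ?addr0 // => i /negbTE ->; by rewrite mulr0.
have hkC : (n.+1)%:R * (kap%:C)%C = 1 :> R[i].
  by rewrite -(rmorph_nat (real_complex R)) -rmorphM hk rmorph1.
have S1 : \sum_j (\sum_i v 0 i * (Rm i j)%:C%C) = sig.
  rewrite exchange_big /=; apply: eq_bigr => i _.
  by rewrite -mulr_sumr -rmorph_sum /= rs mulr1.
have Hs : (lam + 1) * sig = 0.
  have : \sum_j (a%:C%C * (\sum_i v 0 i * (Rm i j)%:C%C) - (a * kap)%:C%C * sig - v 0 j)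
        = \sum_j lam * v 0 j by apply: eq_bigr => j _; exact: E.
  rewrite !sumrB -!mulr_sumr S1 sumr_const card_ord -/sig.
  have -> : (a * kap)%:C%C * (sig *+ n.+1) = a%:C%C * sig * ((n.+1)%:R * (kap%:C)%C).
    by rewrite rmorphM /= -mulr_natr; ring.
  rewrite hkC => H; rewrite mulrDl mul1r -H; ring.
have [lam1|lam1] := eqVneq (lam + 1) 0.
  have -> : lam = -1 by rewrite -(subrK 1 lam) addrAC lam1 add0r.
  by rewrite /= ltrN10.
have sig0 : sig = 0 by move: Hs => /eqP; rewrite mulf_eq0 (negbTE lam1) /= => /eqP.
have E2 j : a%:C%C * (\sum_i v 0 i * (Rm i j)%:C%C) = (lam + 1) * v 0 j.
  by move: (E j); rewrite sig0 mulr0 subr0 => /eqP; rewrite subr_eq => /eqP ->; ring.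
case: (@real_arg_maxP _ _ ord0 xpredT (fun i => `|v 0 i|) isT (fun i _ => normr_real _))
  => j _ jmax.
have vmax i : `|v 0 i| <= `|v 0 j| by exact: jmax.
have vj : 0 < `|v 0 j|.
  have [i vi] : exists i, v 0 i != 0.
    case: (pickP (fun i => v 0 i != 0)) => [i hi|h]; first by exists i.
    move: vn0; suff -> : v = 0 by rewrite eqxx.
    by apply/rowP => i; rewrite mxE; move: (h i) => /negbFE/eqP.
  by apply: lt_le_trans (vmax i); rewrite normr_gt0.
have H1 : `|lam + 1| * `|v 0 j| <= `|a%:C%C| * `|v 0 j|.
  rewrite -normrM -E2 normrM ler_wpM2l //.
  apply: le_trans (ler_norm_sum _ _ _) _.
  have -> : `|v 0 j| = \sum_i `|v 0 j| * (Rm i j)%:C%C.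
    by rewrite -mulr_sumr -rmorph_sum /= cs rmorph1 mulr1.
  apply: ler_sum => i _; rewrite normrM (ger0_norm (x := (Rm i j)%:C%C)) ?ler0c //.
  by rewrite ler_wpM2r ?ler0c.
have H2 : `|lam + 1| <= `|a%:C%C| by rewrite -(ler_pM2r vj).
have H3 : `|a%:C%C| < 1.
  by rewrite normc_def ltcE /= expr0n /= addr0 sqrtr_sqr ha andbT.
have := le_lt_trans H2 H3.
case: lam {hv E E2 Hs lam1 H1 H2} => x y.
rewrite normc_def ltcE /= => /andP [_ hxy].
have : `|x + 1| <= Num.sqrt ((x + 1) ^+ 2 + y ^+ 2).
  by rewrite -sqrtr_sqr ler_wsqrtr // lerDl sqr_ge0.
move: hxy; rewrite [(x + 1)]/= => h1 h2.
rewrite addr0 in h1; have := ler_norm (x + 1); lra.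
Qed.


Lemma wext_pos (R : realType) (w : R -> R) :
  (forall x : R, 0 <= x <= 1 -> 0 < w x) -> forall y, 0 < wext w y.
Proof.
move=> wpos y; rewrite /wext.
case: ifP => [_|/negbT]; first by apply: wpos; rewrite lexx ler01.
rewrite -ltNge => y0; case: ifP => [_|/negbT]; first by apply: wpos; rewrite ler01 lexx.
by rewrite -ltNge => y1; apply: wpos; rewrite !ltW.
Qed.

Lemma hfield1_is_diff (R : realType) (w : R -> R) (Rm : 'M[R]_1) :
  (forall y, 0 < wext w y) ->
  is_diff (unif R 1) (hfield w Rm)
   (fun v => v *m \matrix_(i, j) (0 * (Rm i j - (1%:R)^-1) - (i == j)%:R)).
Proof.
move=> wp.
have eqh : hfield w Rm = cst (row 0 Rm) - id.
  apply/funext => y; rewrite /hfield mulmx_sum_row big_ord1 /= !mxE /Sw big_ord1.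
  by rewrite mulVf ?gt_eqF // scale1r.
rewrite eqh; apply: is_diff_eq (is_diffB (is_diff_cst (row 0 Rm) (unif R 1)) (is_diff_id _)) _.
apply/funext => v /=; apply/rowP => j; rewrite !mxE big_ord1 !mxE (ord1 j) /=.
by rewrite mul0r add0r sub0r mulrN1.
Qed.

Lemma lin1_mul (R : realType) n (M : 'M[R]_n) : lin1_mx (fun v : 'rV[R]_n => v *m M) = M.
Proof. by apply/matrixP => i j; rewrite mxE -rowE mxE. Qed.

Lemma hfield_eq0 (R : realType) n (w : R -> R) (Rm : 'M[R]_n.+1) :
  (forall y, 0 < wext w y) -> (forall j, \sum_i Rm i j = 1) ->
  hfield w Rm (unif R n.+1) = 0.
Proof.
move=> wp cs; apply/rowP => j; rewrite !mxE.
set c := wext w (n.+1%:R^-1).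
have w0 : c != 0 by rewrite gt_eqF ?wp.
have hS : Sw w (unif R n.+1) = n.+1%:R * c.
  rewrite /Sw (eq_bigr (fun _ => c)) ?sumr_const ?card_ord ?mulr_natl // => i _.
  by rewrite mxE.
rewrite hS; under eq_bigr => i _ do rewrite !mxE -/c.
have -> : (n.+1%:R * c)^-1 * c = n.+1%:R^-1.
  by rewrite invfM -mulrA mulVf // mulr1.
by rewrite -mulr_sumr cs mulr1 subrr.
Qed.

End Aux.
Unset Implicit Arguments. Set Strict Implicit.

Theorem corollary2 (R : realType) (k : nat) (w w' : R -> R) (Rm : 'M[R]_k) :
  (0 < k)%N ->
  (forall x : R, 0 <= x <= 1 -> 0 < w x) ->
  (forall x y : R, 0 <= x -> x <= y -> y <= 1 -> w y <= w x) ->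
  is_derivative_on01 w w' ->
  doubly_stochastic Rm ->
  - (w' (k%:R^-1) / w (k%:R^-1)) < k%:R ->
  stable_equilibrium (hfield w Rm) (unif R k).
Proof.
case: k Rm => [//|n] Rm _ wpos mono hd [nn [rs cs]] hk.
have wp := wext_pos wpos.
split; first exact: hfield_eq0.
case: n Rm nn rs cs hk => [|n] Rm nn rs cs hk.
  have [Hd Hv] := hfield1_is_diff Rm wp.
  split => //.
  rewrite /jacobian Hv lin1_mul.
  apply: (eig_neg cs rs nn) => //.
  - by rewrite mulfV // oner_neq0.
  - by rewrite normr0 ltr01.
have [Hd Hv] := hfield_is_diff wpos hd cs.
split => //.
rewrite /jacobian Hv lin1_mul.
apply: (eig_neg cs rs nn).
  by rewrite mulfV // pnatr_eq0.
set x := (n.+2)%:R^-1 in hk *.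
have x01 : 0 < x < 1.
  by rewrite invr_gt0 ltr0n /= invf_lt1 ?ltr0n // ltr1n.
have wx : 0 < w x by apply: wpos; case/andP: x01 => a0 a1; rewrite !ltW.
have wp' : w' x <= 0 := wprime_le0 x01 hd mono.
have k0 : (0 : R) < (n.+2)%:R by rewrite ltr0n.
have -> : w' x / ((n.+2)%:R * w x) = (w' x / w x) / (n.+2)%:R.
  by field; rewrite !gt_eqF.
have q0 : w' x / w x <= 0 by rewrite pmulr_lle0 // invr_gt0.
rewrite ler0_norm; last by rewrite pmulr_lle0 // invr_gt0.
by rewrite -mulNr ltr_pdivrMr // mul1r.
Qed.
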